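(* Let $G$ be a connected graph with $n$ vertices, and let $L$ be a list-assignment of $G$. If $|L(v)|\ge \deg(v)+1$ for all $v\in V(G)$ and $|L(w)|\ge \deg(w)+2$ for at least one $w\in V(G)$, then $\mathcal{C}(G,L)$ is connected and has diameter at most $\tfrac12(3n^2+5n)$.
   Context: A list-assignment $L$ of a graph $G$ assigns to each vertex $v$ a finite set $L(v)\subseteq\mathbb{N}$. A (proper) $L$-colouring is a proper colouring $\varphi:V(G)\to\mathbb{N}$ with $\varphi(v)\in L(v)$ for all $v$. A recolouring step changes the colour of a single vertex $v$ to another colour of $L(v)$ so that the result is again a proper $L$-colouring. The list colouring reconfiguration graph $\mathcal{C}(G,L)$ has as vertices all proper $L$-colourings of $G$, two being adjacent if one is obtained from the other by a single recolouring step. $\deg(v)$ is the number of neighbours of $v$. *)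

(* Defs.v *)
From mathcomp Require Import all_boot.
From mathcomp Require Import finmap.
Set Implicit Arguments. Unset Strict Implicit. Unset Printing Implicit Defensive.
Local Open Scope fset_scope.

Definition simple_graph (T : finType) (e : rel T) : Prop :=
  symmetric e /\ irreflexive e.

Definition graph_connected (T : finType) (e : rel T) : Prop :=
  forall x y : T, connect e x y.

Definition deg (T : finType) (e : rel T) (v : T) : nat := #|[set w | e v w]|.

Definition is_Lcol (T : finType) (e : rel T) (L : T -> {fset nat})
    (c : {ffun T -> nat}) : bool :=
  [forall v, c v \in L v] && [forall v, forall w, e v w ==> (c v != c w)].

Definition recolour_step (T : finType) (e : rel T) (L : T -> {fset nat})
    (c c' : {ffun T -> nat}) : bool :=
  [&& is_Lcol e L c, is_Lcol e L c' &
      [exists v, (c v != c' v) && [forall w, (w != v) ==> (c w == c' w)]]].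

(* distance in the reconfiguration graph C(G,L) is at most k *)
Fixpoint reconf_within (T : finType) (e : rel T) (L : T -> {fset nat})
    (k : nat) (c c' : {ffun T -> nat}) : Prop :=
  c = c' \/
  match k with
  | 0 => False
  | k'.+1 => exists c'', recolour_step e L c c'' /\ reconf_within e L k' c'' c'
  end.

(* Main.v *)
Require Import Defs.
From mathcomp Require Import all_boot.
From mathcomp Require Import finmap zify.
From Stdlib Require Import Lia.
Local Open Scope fset_scope.
Set Implicit Arguments. Unset Strict Implicit. Unset Printing Implicit Defensive.
Section S.
Variables (T : finType) (e : rel T) (L : T -> {fset nat}).

Lemma reach_refl n c : reconf_within e L n c c.
Proof. by case: n => [|n]; left. Qed.

Lemma reach_mono n m a b : n <= m -> reconf_within e L n a b -> reconf_within e L m a b.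
Proof.
elim: n m a => [|n IH] m a le /=.
- by case=> // ->; apply: reach_refl.
- case: m le => [//|m] le.
  case=> [->|[c [s r]]]; first by left.
  by right; exists c; split=> //; apply: IH r.
Qed.

Lemma reach_trans n m a b c : reconf_within e L n a b -> reconf_within e L m b c ->
  reconf_within e L (n + m) a c.
Proof.
elim: n a => [|n IH] a.
- by case=> // ->.
- move=> H r2; case: H => [ab|[d [s r]]].
    by subst a; apply: (reach_mono _ r2); rewrite leq_addl.
  by right; exists d; split=> //; apply: IH r r2.
Qed.

Lemma reach_step a b : recolour_step e L a b -> reconf_within e L 1 a b.
Proof. by move=> s; right; exists b; split=> //; left. Qed.

Definition upd (g : {ffun T -> nat}) x d : {ffun T -> nat} :=
  [ffun y => if y == x then d else g y].

Lemma upd_step g x d : symmetric e -> irreflexive e -> is_Lcol e L g -> d \in L x -> d != g x ->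
  (forall y, e x y -> g y != d) ->
  is_Lcol e L (upd g x d) /\ recolour_step e L g (upd g x d).
Proof.
move=> esym eirr gc; move: (gc) => /andP[/forallP gL /forallP gp] dL dx hy.
have cU : is_Lcol e L (upd g x d).
  apply/andP; split; apply/forallP => v; rewrite !ffunE.
    by case: eqP => [->|_].
  apply/forallP=> u; apply/implyP=> evu; rewrite !ffunE.
  case: (eqVneq v x) => [vx|vx]; case: (eqVneq u x) => [ux|ux].
  - by subst u v; rewrite eirr in evu.
  - by subst v; rewrite eq_sym; apply: hy.
  - by subst u; apply: hy; rewrite esym.
  - by have := gp v => /forallP /(_ u) /implyP; apply.
split=> //; apply/and3P; split=> //.
apply/existsP; exists x; rewrite !ffunE eqxx eq_sym dx /=.
by apply/forallP=> y; apply/implyP=> yx; rewrite ffunE (negbTE yx).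
Qed.
End S.
Lemma uniq_map_inj (A B : eqType) (f : A -> B) s : uniq (map f s) -> {in s &, injective f}.
Proof.
elim: s => //= a s IH /andP[nin u] y z; rewrite !inE => /orP[/eqP->|ys] /orP[/eqP->|zs] // fe.
- by rewrite fe map_f in nin.
- by rewrite -fe map_f in nin.
- exact: IH.
Qed.

Section Stuck.
Variables (T : finType) (e : rel T) (L : T -> {fset nat}).

Definition free (g : {ffun T -> nat}) x :=
  has (fun d => (d != g x) && [forall y, e x y ==> (g y != d)]) (enum_fset (L x)).

Lemma freeP (g : {ffun T -> nat}) x : reflect (exists d, [/\ d \in L x, d != g x & forall y, e x y -> g y != d]) (free g x).
Proof.
apply: (iffP hasP) => [[d dL /andP[dx /forallP H]]|[d [dL dx H]]].
  by exists d; split=> // y exy; have := H y; rewrite exy.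
by exists d => //; rewrite dx; apply/forallP=> y; apply/implyP; apply: H.
Qed.

Lemma stuck_core (g : {ffun T -> nat}) x : is_Lcol e L g -> ~~ free g x ->
  let l := rem (g x) (enum_fset (L x)) in
  let s := map g (enum [set y | e x y]) in
  [/\ uniq l, size l = (#|` L x|).-1, {subset l <= s} & size s = deg e x].
Proof.
move=> gc nf l s.
have gxL : g x \in L x by move: gc => /andP[/forallP H _]; apply: H.
split.
- by apply: rem_uniq; apply: fset_uniq.
- by rewrite size_rem.
- move=> d; rewrite mem_rem_uniq ?fset_uniq // inE => /andP[dx dL].
  case: (boolP [exists y, e x y && (g y == d)]) => [/existsP[y /andP[exy /eqP <-]]|].
    by apply: map_f; rewrite mem_enum inE.
  move=> /existsPn H; case/negP: nf; apply/freeP; exists d; split=> //.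
  by move=> y exy; have := H y; rewrite exy.
- by rewrite size_map /deg cardE.
Qed.

Lemma notfree_card (g : {ffun T -> nat}) x : is_Lcol e L g -> ~~ free g x -> #|` L x| <= deg e x + 1.
Proof.
move=> gc nf; have [ul sl sub ss] := stuck_core gc nf.
have := uniq_leq_size ul sub; rewrite sl ss addn1.
by case: (#|` L x|).
Qed.

Lemma stuck (g : {ffun T -> nat}) x : is_Lcol e L g -> ~~ free g x -> deg e x + 1 <= #|` L x| ->
  (forall y z, e x y -> e x z -> g y = g z -> y = z) /\ (forall y, e x y -> g y \in L x).
Proof.
move=> gc nf dl; have [ul sl sub ss] := stuck_core gc nf.
set l := rem _ _ in ul sl sub; set s := map _ _ in sub ss.
have sz : size s <= size l by rewrite sl ss -subn1 leq_subRL ?addn1 // (leq_trans _ dl) // addn1.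
have us : uniq s := leq_size_uniq ul sub sz.
have [_ eqls] := uniq_min_size ul sub sz.
split.
- move=> y z exy exz gyz; apply: (uniq_map_inj us) => //; by rewrite mem_enum inE.
- move=> y exy; have : g y \in s by apply: map_f; rewrite mem_enum inE.
  rewrite -eqls mem_rem_uniq ?fset_uniq // inE => /andP[_ ]; done.
Qed.
End Stuck.
Fixpoint F k := if k is k'.+1 then (F k' + (3 * k').+1)%N else 0.

Section Main.
Variables (T : finType) (e : rel T) (L : T -> {fset nat}).
Hypothesis esym : symmetric e.
Hypothesis eirr : irreflexive e.
Hypothesis Ldeg : forall v, deg e v + 1 <= #|` L v|.
Variable w : T.
Hypothesis Lw : deg e w + 2 <= #|` L w|.
Variable h : T -> nat.
Hypothesis hedge : forall x y, e x y -> h y <= (h x).+1.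
Hypothesis hw : h w = 0.

Lemma colP (g : {ffun T -> nat}) a b : is_Lcol e L g -> e a b -> g a != g b.
Proof. by case/andP=> _ /forallP /(_ a) /forallP /(_ b) /implyP; apply. Qed.

Lemma colL (g : {ffun T -> nat}) a : is_Lcol e L g -> g a \in L a.
Proof. by case/andP=> /forallP /(_ a). Qed.

Definition pc (U : {set T}) := forall x, x \in U -> x != w ->
  exists p, [/\ p \in U, e p x & (h p).+1 = h x].

Lemma w_free (g : {ffun T -> nat}) : is_Lcol e L g -> free e L g w.
Proof.
move=> gc; apply/negPn/negP => nf; have := notfree_card gc nf.
by rewrite leqNgt (leq_trans _ Lw) // addn1 addn2.
Qed.

Lemma change n : forall U x (g : {ffun T -> nat}), h x = n -> pc U -> x \in U -> is_Lcol e L g ->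
  exists g', [/\ is_Lcol e L g', reconf_within e L n.+1 g g', g' x != g x &
   forall y, g' y != g y -> y \in U /\ (y = x \/ (h y < h x /\ ((h y).+1 = h x -> g' y != g x)))].
Proof.
elim: n => [|n IH] U x g hx pcU xU gc.
all: case: (boolP (free e L g x)) => [/freeP [d [dL dx dn]]|nf].
1,3: have [c1 s1] := upd_step esym eirr gc dL dx dn;
  exists (upd g x d); split => //;
  [ by apply: (reach_mono _ (reach_step s1))
  | by rewrite ffunE eqxx
  | by move=> y; rewrite ffunE; case: (eqVneq y x) => [->|yx]; [split => //; left | rewrite eqxx]].
all: have xw : x != w by apply: contraNneq nf => ->; apply: w_free.
all: have [p [pU epx hp]] := pcU x xU xw.
  by rewrite hx in hp.
have hpn : h p = n by move: hp; rewrite hx => -[].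
have [g2 [c2 r2 ch2 sp2]] := IH U p g hpn pcU pU gc.
have [inj memL] := stuck gc nf (Ldeg x).
have exp : e x p by rewrite esym.
have g2x : g2 x = g x.
  apply/eqP; apply/negPn/negP => /sp2 [_ [xp|[lt _]]].
    by move: epx; rewrite xp eirr.
  by move: lt; rewrite -hp ltnNge leqnSn.
have bL : g p \in L x := memL p exp.
have bx : g p != g2 x by rewrite g2x eq_sym; apply: colP.
have bn : forall z, e x z -> g2 z != g p.
  move=> z exz; case: (eqVneq z p) => [->//|zp].
  case: (eqVneq (g2 z) (g z)) => [->|ch].
    by apply/negP=> /eqP gzp; rewrite (inj z p exz exp gzp) eqxx in zp.
  have [_ [zp'|[lt _]]] := sp2 z ch; first by rewrite zp' eqxx in zp.
  have hle : h x <= (h z).+1 by apply: hedge; rewrite esym.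
  by move: hle; rewrite -hp ltnS leqNgt lt.
have [c3 s3] := upd_step esym eirr c2 bL bx bn.
exists (upd g2 x (g p)); split => //.
- by rewrite -addn1; apply: reach_trans r2 (reach_step s3).
- by rewrite ffunE eqxx eq_sym; apply: colP.
- move=> y; rewrite ffunE; case: (eqVneq y x) => [->|yx] ch; first by split=> //; left.
  have [yU [yp|[lt _]]] := sp2 y ch; split=> //; right.
    subst y; rewrite -hp ltnSn; split=> // _; rewrite -g2x; apply: colP => //.
  split; first by rewrite -hp ltnS ltnW.
  by move=> hyx; move: lt; rewrite -ltnS hyx -hp ltnn.
Qed.

Lemma hbound n : forall U x, h x = n -> pc U -> x \in U -> n < #|U|.
Proof.
elim: n => [|n IH] U x hx pcU xU; first by rewrite card_gt0; apply/set0Pn; exists x.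
have xw : x != w by apply/eqP => xw; rewrite xw hw in hx.
have [p [pU epx hp]] := pcU x xU xw.
pose U' := [set y in U | h y <= n].
have pcU' : pc U'.
  move=> y; rewrite inE => /andP[yU hy] yw; have [q [qU eqy hq]] := pcU y yU yw.
  exists q; split=> //; rewrite inE qU /= -ltnS hq; exact: leqW.
have hpn : h p = n by move: hp; rewrite hx => -[].
have pU' : p \in U' by rewrite inE pU hpn leqnn.
have l1 := IH U' p hpn pcU' pU'.
have l2 : #|U'| < #|U|.
  apply: proper_card; apply/properP; split.
    by apply/subsetP => y; rewrite inE => /andP[].
  by exists x => //; rewrite inE hx ltnn andbF.
exact: leq_ltn_trans l1 l2.
Qed.

Section Fix.
Variables (U : {set T}) (v : T) (c : nat).
Hypothesis pcU : pc U.
Hypothesis vU : v \in U.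
Hypothesis vmax : forall y, y \in U -> h y <= h v.
Hypothesis cL : c \in L v.

Definition Sset (g : {ffun T -> nat}) := [set y | e v y && (g y == c)].

Lemma upd_out (g : {ffun T -> nat}) x d y : x \in U -> y \notin U -> upd g x d y = g y.
Proof. by move=> xU yU; rewrite ffunE; case: eqP => // E; rewrite E xU in yU. Qed.

Lemma fixv s : forall g : {ffun T -> nat}, #|Sset g| = s -> is_Lcol e L g ->
  (forall y, y \notin U -> e v y -> g y != c) ->
  exists g', [/\ is_Lcol e L g', reconf_within e L (s.*2 + h v + 1) g g', g' v = c &
     forall y, y \notin U -> g' y = g y].
Proof.
elim: s => [|s IH] g sz gc fr.
  case: (eqVneq (g v) c) => [gv|gv].
    by exists g; split=> //; apply: reach_refl.
  have hn : forall y, e v y -> g y != c.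
    move=> y evy; apply/negP => gy; have : y \in Sset g by rewrite inE evy gy.
    by move/card0_eq: sz => ->; rewrite inE.
  have cv : c != g v by rewrite eq_sym.
  have [c1 s1] := upd_step esym eirr gc cL cv hn.
  exists (upd g v c); split => //.
  - by apply: (reach_mono _ (reach_step s1)); rewrite leq_addl.
  - by rewrite ffunE eqxx.
  - by move=> y yU; apply: upd_out.
have [u uS] : exists u, u \in Sset g.
  by apply/set0Pn; rewrite -card_gt0 sz.
move: (uS); rewrite inE => /andP[evu /eqP guc].
have uU : u \in U.
  by apply/negPn/negP => nu; have := fr u nu evu; rewrite guc eqxx.
have uv : u != v by apply/eqP => E; rewrite E eirr in evu.
have gvc : g v != c by rewrite -guc; apply: colP.
case: s IH sz => [|s] IH sz.
  have Su : forall y, y \in Sset g -> y = u.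
    have /cards1P [x Sx] : #|Sset g| == 1 by rewrite sz.
    by move=> y; move: uS; rewrite Sx !inE => /eqP -> /eqP.
  have [g2 [c2 r2 ch2 sp2]] := change (erefl (h u)) pcU uU gc.
  have hu : h u <= h v := vmax uU.
  have g2v : g2 v = g v.
    apply/eqP; apply/negPn/negP => /sp2 [_ [vu|[lt _]]]; first by rewrite vu eqxx in uv.
    by move: lt; rewrite ltnNge hu.
  have hn : forall z, e v z -> g2 z != c.
    move=> z evz; case: (eqVneq z u) => [->|zu]; first by rewrite -guc.
    case: (eqVneq (g2 z) (g z)) => [->|ch].
      apply/negP => /eqP gz; have : z \in Sset g by rewrite inE evz gz eqxx.
      by move/Su => E; rewrite E eqxx in zu.
    have [_ [zu'|[lt imp]]] := sp2 z ch; first by rewrite zu' eqxx in zu.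
    have hle : h v <= (h z).+1 by apply: hedge; rewrite esym.
    rewrite -guc; apply: imp; apply/eqP; rewrite eqn_leq lt /=.
    exact: leq_trans hu hle.
  have cv : c != g2 v by rewrite g2v eq_sym.
  have [c3 s3] := upd_step esym eirr c2 cL cv hn.
  exists (upd g2 v c); split => //.
  - apply: (reach_mono _ (reach_trans r2 (reach_step s3))).
    by clear -hu; rewrite -?mul2n; lia.
  - by rewrite ffunE eqxx.
  - move=> y yU; rewrite upd_out //; apply/eqP; apply/negPn/negP => /sp2 [yU' _].
    by rewrite yU' in yU.
case: (boolP (free e L g u)) => [/freeP [d [dL du dn]]|nfu].
  have [c1 s1] := upd_step esym eirr gc dL du dn.
  have Se : Sset (upd g u d) = Sset g :\ u.
    apply/setP => y; rewrite !inE ffunE; case: (eqVneq y u) => [->|yu] /=.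
      by rewrite -guc (negbTE du) andbF.
    by [].
  have sz1 : #|Sset (upd g u d)| = s.+1.
    by have := cardsD1 u (Sset g); rewrite uS sz Se add1n => -[].
  have fr1 : forall y, y \notin U -> e v y -> upd g u d y != c.
    by move=> y yU; rewrite upd_out //; apply: fr.
  have [g' [c' r' g'v out']] := IH _ sz1 c1 fr1.
  exists g'; split => //.
  - apply: (reach_mono _ (reach_trans (reach_step s1) r')).
    by clear; rewrite -!mul2n; lia.
  - by move=> y yU; rewrite out' // upd_out.
have vfree : free e L g v.
  apply/negPn/negP => nfv.
  have [injv _] := stuck gc nfv (Ldeg v).
  have [u' u'S] : exists u', u' \in Sset g :\ u.
    by apply/set0Pn; rewrite -card_gt0; have := cardsD1 u (Sset g); rewrite uS sz add1n => -[<-].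
  move: u'S; rewrite !inE => /andP[u'u /andP[evu' /eqP gu']].
  by have := injv u' u evu' evu; rewrite gu' guc => /(_ erefl) E; rewrite E eqxx in u'u.
move/freeP: vfree => [d [dL dv dn]].
have [c1 s1] := upd_step esym eirr gc dL dv dn.
have [inju memLu] := stuck gc nfu (Ldeg u).
have euv : e u v by rewrite esym.
have aL : g v \in L u := memLu v euv.
have a1 : g v != upd g v d u by rewrite ffunE (negbTE uv); apply: colP.
have hn1 : forall z, e u z -> upd g v d z != g v.
  move=> z euz; rewrite ffunE; case: (eqVneq z v) => [_|zv] //.
  by apply/negP => /eqP E; rewrite (inju z v euz euv E) eqxx in zv.
have [c2 s2] := upd_step esym eirr c1 aL a1 hn1.
set g2 := upd (upd g v d) u (g v) in c2 s2 *.
have Se : Sset g2 = Sset g :\ u.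
  apply/setP => y; rewrite !inE !ffunE; case: (eqVneq y u) => [->|yu] /=.
    by rewrite (negbTE gvc) andbF.
  by case: (eqVneq y v) => [->|]; rewrite ?eirr.
have sz1 : #|Sset g2| = s.+1.
  by have := cardsD1 u (Sset g); rewrite uS sz Se add1n => -[].
have out2 : forall y, y \notin U -> g2 y = g y.
  by move=> y yU; rewrite !upd_out.
have fr2 : forall y, y \notin U -> e v y -> g2 y != c.
  by move=> y yU; rewrite out2 //; apply: fr.
have [g' [c' r' g'v out']] := IH _ sz1 c2 fr2.
exists g'; split => //.
- apply: (reach_mono _ (reach_trans (reach_step s1) (reach_trans (reach_step s2) r'))).
  by clear; rewrite -!mul2n; lia.
- by move=> y yU; rewrite out' // out2.
Qed.
End Fix.

Lemma mainind k : forall U : {set T}, #|U| = k -> pc U -> forall a b : {ffun T -> nat},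
  is_Lcol e L a -> is_Lcol e L b -> (forall y, y \notin U -> a y = b y) ->
  reconf_within e L (F k) a b.
Proof.
elim: k => [|k IH] U sz pcU a b ca cb ag.
  have -> : a = b by apply/ffunP => y; apply: ag; rewrite (cards0_eq sz) inE.
  exact: reach_refl.
have [x0 x0U] : exists x0, x0 \in U by apply/set0Pn; rewrite -card_gt0 sz.
case: (@arg_maxnP _ x0 (mem U) h x0U) => v vU vmax.
have {}vU : v \in U := vU.
have {}vmax : forall y, y \in U -> h y <= h v := fun y yU => vmax y yU.
have cL : b v \in L v := colL v cb.
have fr : forall y, y \notin U -> e v y -> a y != b v.
  by move=> y yU evy; rewrite ag // eq_sym; apply: colP.
have [g' [c' r' g'v out']] := fixv pcU vU vmax cL (erefl _) ca fr.
have szD : #|U :\ v| = k by have := cardsD1 v U; rewrite vU sz add1n => -[].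
have Sk : #|Sset v (b v) a| <= k.
  rewrite -szD; apply: subset_leq_card; apply/subsetP => y; rewrite !inE => /andP[evy /eqP ay].
  apply/andP; split; first by apply/eqP => E; rewrite E eirr in evy.
  by apply/negPn/negP => yU; have := fr y yU evy; rewrite ay eqxx.
have hk : h v <= k by have := hbound (erefl (h v)) pcU vU; rewrite sz ltnS.
have pcD : pc (U :\ v).
  move=> x; rewrite !inE => /andP[xv xU] xw; have [p [pU epx hp]] := pcU x xU xw.
  exists p; split=> //; rewrite !inE pU andbT; apply/eqP => E.
  by have := vmax x xU; rewrite -E -hp ltnn.
have ag' : forall y, y \notin U :\ v -> g' y = b y.
  move=> y; rewrite !inE negb_and negbK => /orP[/eqP->//|yU].
  by rewrite out' // ag.
have := reach_trans r' (IH _ szD pcD g' b c' cb ag').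
apply: reach_mono; rewrite /= addnC leq_add2l.
by clear -Sk hk; rewrite -mul2n; lia.
Qed.
End Main.

Lemma F_le k : (F k <= (3 * k ^ 2 + 5 * k) %/ 2)%N.
Proof.
rewrite leq_divRL //.
suff : (F k * 2 + 6 * k = 3 * k ^ 2 + 5 * k)%N by move=> <-; rewrite leq_addr.
elim: k => [//|k IH] /=.
rewrite mulnDl; nia.
Qed.

Section H.
Variables (T : finType) (e : rel T) (w : T).

Fixpoint R i : {set T} :=
  if i is i'.+1 then R i' :|: [set y | [exists x in R i', e x y]] else [set w].

Lemma R_path p : forall i y, y \in R i -> path e y p -> last y p \in R (i + size p)%N.
Proof.
elim: p => [|z p IH] i y yR /=; first by rewrite addn0.
case/andP => eyz pz; rewrite addnS -addSn; apply: IH pz.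
by rewrite /= inE; apply/orP; right; rewrite inE; apply/existsP; exists y; rewrite yR eyz.
Qed.

Lemma h_exists : (forall x, connect e w x) -> exists h : T -> nat,
  [/\ h w = 0, (forall x y, e x y -> h y <= (h x).+1) &
     (forall x, x != w -> exists p, e p x /\ (h p).+1 = h x)].
Proof.
move=> conn.
have ex : forall x, exists i, x \in R i.
  move=> x; have /connectP [p pp ->] := conn x; exists (0 + size p)%N.
  by apply: R_path pp; rewrite inE.
have : forall x, exists i, x \in R i /\ forall j, x \in R j -> i <= j.
  move=> x; have exP : exists i, (fun i => x \in R i) i by apply: ex.
  by case: (ex_minnP exP) => m Pm minm; exists m; split.
case/fin_all_exists => h hspec.
have hedge : forall x y, e x y -> h y <= (h x).+1.
  move=> x y exy; apply: (hspec y).2; rewrite /= inE; apply/orP; right.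
  by rewrite inE; apply/existsP; exists x; rewrite (hspec x).1 exy.
exists h; split => //.
  by apply/eqP; rewrite -leqn0; apply: (hspec w).2; rewrite inE.
move=> x xw; have [xR minx] := hspec x.
case hx: (h x) => [|i] in xR *.
  by move: xR; rewrite /= inE (negbTE xw).
move: xR; rewrite /= inE => /orP[xi|].
  by have := minx i xi; rewrite hx ltnn.
rewrite inE => /existsP [p /andP[pR epx]]; exists p; split => //.
have hpi := (hspec p).2 i pR.
have := hedge p x epx; rewrite hx ltnS => ip.
by apply/eqP; rewrite eqSS eqn_leq hpi ip.
Qed.
End H.

Theorem mainTheorem1 (T : finType) (e : rel T) (L : T -> {fset nat}) :
  simple_graph e -> graph_connected e ->
  (forall v, deg e v + 1 <= #|` L v|)%N ->
  (exists w, deg e w + 2 <= #|` L w|)%N ->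
  (forall c c' : {ffun T -> nat}, is_Lcol e L c -> is_Lcol e L c' ->
     exists k, reconf_within e L k c c') /\
  (forall c c' : {ffun T -> nat}, is_Lcol e L c -> is_Lcol e L c' ->
     reconf_within e L ((3 * #|T| ^ 2 + 5 * #|T|) %/ 2) c c').
Proof.
move=> [esym eirr] conn Ldeg [w Lw].
have [h [hw hedge hpar]] := h_exists (conn w).
have part2 : forall c c' : {ffun T -> nat}, is_Lcol e L c -> is_Lcol e L c' ->
     reconf_within e L ((3 * #|T| ^ 2 + 5 * #|T|) %/ 2) c c'.
  move=> c c' cc cc'; apply: (reach_mono (F_le #|T|)).
  have pcT : pc e w h [set: T].
    by move=> x _ xw; have [p [epx hp]] := hpar x xw; exists p; split => //; rewrite inE.
  apply: (mainind esym eirr Ldeg Lw hedge hw (cardsT T) pcT cc cc').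
  by move=> y; rewrite inE.
by split => // c c' cc cc'; exists ((3 * #|T| ^ 2 + 5 * #|T|) %/ 2); apply: part2.
Qed.
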